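(* For integers $0\le\ell\le2n$ and $m$, let $q_{\ell,m,2n}$ be the weighted number of paths in the class $\mathcal{C}$ from $(\ell,m)$ to $(2n,0)$. Then \[ \frac{q_{\ell,j,2n}}{j+1}\ge\frac{q_{\ell,k,2n}}{k+1} \] for all integers $0\le j<k\le\ell\le2n$ with $k-j$ even and $n\ge10$.
   Context: The class $\mathcal{C}$ consists of lattice paths with steps in $\{(1,1),(1,-1),(2,-2),(3,-1),(3,1)\}$ never going below $y=0$, weighted as follows: a step ending at the point $(a,b)$ has weight $\frac{a-b+2}{a+b}$ if it is $(1,1)$, $\frac{a-b-2}{a-b}$ if it is $(1,-1)$, $\frac{2}{a-b}$ if it is $(2,-2)$, $\frac{2}{a+b}$ if it is $(3,-1)$, and $\frac{4}{(a+b)(a+b-2)}$ if it is $(3,1)$; the weight of a path is the product of its step weights. Equivalently, $q_{\ell,m,2n}=0$ if $m<0$ or $\ell>2n$, $q_{2n,m,2n}=\delta_{m,0}$, and for $\ell<2n$, $m\ge0$: \[ q_{\ell,m,2n}=\tfrac{\ell-m}{\ell-m+2}q_{\ell+1,m-1,2n}+\tfrac{\ell-m+2}{\ell+m+2}q_{\ell+1,m+1,2n}+\tfrac{2}{\ell-m+4}q_{\ell+2,m-2,2n}+\tfrac{2}{\ell+m+2}q_{\ell+3,m-1,2n}+\tfrac{4}{(\ell+m+4)(\ell+m+2)}q_{\ell+3,m+1,2n}. \] *)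

(* Defs.v *)
From mathcomp Require Import all_boot all_order all_algebra.
Set Implicit Arguments. Unset Strict Implicit. Unset Printing Implicit Defensive.
Import Order.TTheory GRing.Theory Num.Theory.
Local Open Scope ring_scope.

(* qaux N d m = q_{N-d, m, N}  (d = distance to the end abscissa N). *)
Fixpoint qaux (N : nat) (d : nat) (m : int) {struct d} : rat :=
  match d with
  | 0%N => if m == 0 then 1 else 0
  | d1.+1 =>
      if m < 0 then 0 else
      let l : rat := (N - d)%N%:R in
      let M : rat := m%:~R in
      let q1 := fun m' => qaux N d1 m' in
      let q2 := fun m' => match d1 with 0%N => 0 | d2.+1 => qaux N d2 m' end in
      let q3 := fun m' => match d1 with
                          | 0%N => 0 | 1%N => 0
                          | d3.+2 => qaux N d3 m' end in
      (l - M) / (l - M + 2) * q1 (m - 1)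
      + (l - M + 2) / (l + M + 2) * q1 (m + 1)
      + 2 / (l - M + 4) * q2 (m - 2)
      + 2 / (l + M + 2) * q3 (m - 1)
      + 4 / ((l + M + 4) * (l + M + 2)) * q3 (m + 1)
  end.

Definition q (l : nat) (m : int) (N : nat) : rat :=
  if (N < l)%N then 0 else if m < 0 then 0 else qaux N (N - l) m.

(* Main.v *)
Require Import Defs.
From mathcomp Require Import all_boot all_order all_algebra.
From mathcomp Require Import ring lra zify.
Import Order.TTheory GRing.Theory Num.Theory.
Local Open Scope ring_scope.

Lemma qaux_neg N d (m : int) : m < 0 -> qaux N d m = 0.
Proof.
case: d => [|d] /= hm; last by rewrite hm.
by case: eqP hm => // ->.
Qed.

Lemma q_neg l (m : int) N : m < 0 -> q l m N = 0.
Proof. by move=> hm; rewrite /q hm; case: ifP. Qed.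

Lemma q_gt l m N : (N < l)%N -> q l m N = 0.
Proof. by rewrite /q => ->. Qed.

Lemma q_rec l (m : int) N : (l < N)%N -> 0 <= m ->
  q l m N =
   (l%:R - m%:~R) / (l%:R - m%:~R + 2) * q l.+1 (m - 1) N
 + (l%:R - m%:~R + 2) / (l%:R + m%:~R + 2) * q l.+1 (m + 1) N
 + 2 / (l%:R - m%:~R + 4) * q l.+2 (m - 2) N
 + 2 / (l%:R + m%:~R + 2) * q l.+3 (m - 1) N
 + 4 / ((l%:R + m%:~R + 4) * (l%:R + m%:~R + 2)) * q l.+3 (m + 1) N.
Proof.
move=> hl hm.
have hq : forall l' m', (l' <= N)%N -> q l' m' N = qaux N (N - l') m'.
  move=> l' m' hl'; rewrite /q ltnNge hl' /=.
  by case: ifP => // hm'; rewrite qaux_neg.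
have h1 : forall m', qaux N (N - l.+1) m' = q l.+1 m' N by move=> m'; rewrite hq.
have h2 : forall m', match (N - l.+1)%N with 0%N => 0 | d2.+1 => qaux N d2 m' end = q l.+2 m' N.
  move=> m'; case E: (N - l.+1)%N => [|d2]; first by rewrite q_gt //; lia.
  by rewrite hq; [congr qaux; lia | lia].
have h3 : forall m', match (N - l.+1)%N with 0%N => 0 | 1%N => 0 | d3.+2 => qaux N d3 m' end = q l.+3 m' N.
  move=> m'; case E: (N - l.+1)%N => [|[|d3]]; try by rewrite q_gt //; lia.
  by rewrite hq; [congr qaux; lia | lia].
rewrite hq ?(ltnW hl) //.
have -> : (N - l = (N - l.+1).+1)%N by rewrite subnSK.
rewrite [qaux _ _.+1 _]/= ltNge hm /=.
have -> : ((N - (N - l.+1).+1) = l)%N by rewrite subnSK // subKn // ltnW.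
by rewrite !h1 !h2 !h3.
Qed.


Lemma nat_intr (l : nat) : ((l%:Z)%:~R : rat) = l%:R.
Proof. by rewrite pmulrn. Qed.

Lemma q_base l m N : (N <= l)%N -> 0 <= q l m N.
Proof.
move=> hl; rewrite /q; case: ifP => // _; case: ifP => // _.
have -> : (N - l = 0)%N by lia.
by rewrite /=; case: eqP.
Qed.

Lemma q_ge0 N k : forall l (m : int), (N - l <= k)%N -> m <= l%:Z -> 0 <= q l m N.
Proof.
elim: k => [|k IH] l m hk hm.
  by apply: q_base; lia.
case: (leqP N l) => hlN; first exact: q_base.
case: (ltrP m 0) => hm0; first by rewrite q_neg.
have hLM : (m%:~R : rat) <= l%:R by rewrite -nat_intr ler_int.
have hM : (0 : rat) <= m%:~R by rewrite ler0z.
Time rewrite q_rec //.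
Time have i1 : 0 <= q l.+1 (m - 1) N by apply: IH; lia.
have i2 : 0 <= q l.+1 (m + 1) N by apply: IH; lia.
have i3 : 0 <= q l.+2 (m - 2) N by apply: IH; lia.
have i4 : 0 <= q l.+3 (m - 1) N by apply: IH; lia.
have i5 : 0 <= q l.+3 (m + 1) N by apply: IH; lia.
repeat apply: addr_ge0; apply: mulr_ge0; try assumption; apply: divr_ge0; first [lra | apply: mulr_ge0; lra].
Qed.


Lemma q_ge0' N l (m : int) : m <= l%:Z -> 0 <= q l m N.
Proof. by move=> h; apply: (@q_ge0 N (N - l)%N). Qed.

Lemma intD2 (m : int) : ((m + 2)%:~R : rat) = m%:~R + 2.
Proof. by rewrite intrD. Qed.
Lemma intD1 (m : int) : ((m + 1)%:~R : rat) = m%:~R + 1.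
Proof. by rewrite intrD. Qed.
Lemma intB1 (m : int) : ((m - 1)%:~R : rat) = m%:~R - 1.
Proof. by rewrite intrD. Qed.
Lemma intB2 (m : int) : ((m - 2)%:~R : rat) = m%:~R - 2.
Proof. by rewrite intrD. Qed.

Lemma lowerF l (m : int) N : 0 <= m -> m + 2 <= l%:Z ->
  (l%:R - m%:~R) / (l%:R - m%:~R + 2) * q l.+2 m N
  + 2 / (l%:R - m%:~R + 4) * q l.+3 (m - 1) N <= q l.+1 (m + 1) N.
Proof.
move=> hm hml.
have hLM : ((m + 2)%:~R : rat) <= (l%:Z)%:~R by rewrite ler_int.
rewrite intD2 nat_intr in hLM.
have hM : (0 : rat) <= m%:~R by rewrite ler0z.
case: (ltnP l.+1 N) => hN; last first.
  rewrite (@q_gt l.+2 m N) ?(@q_gt l.+3 (m - 1) N); try lia.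
  rewrite !mulr0 addr0; apply: q_ge0'; lia.
have h01 : 0 <= m + 1 by lia.
rewrite [q l.+1 (m + 1) N]q_rec //.
have -> : m + 1 - 1 = m by lia.
have -> : m + 1 - 2 = m - 1 by lia.
rewrite intD1 (_ : (l.+1)%:R = l%:R + 1 :> rat); last by rewrite -addn1 natrD.
have -> : l%:R + 1 - (m%:~R + 1) = l%:R - m%:~R :> rat by ring.
have i2 : 0 <= q l.+2 (m + 1 + 1) N by apply: q_ge0'; lia.
have i4 : 0 <= q l.+4 m N by apply: q_ge0'; lia.
have i5 : 0 <= q l.+4 (m + 1 + 1) N by apply: q_ge0'; lia.
have c2 : 0 <= (l%:R - m%:~R + 2) / (l%:R + 1 + (m%:~R + 1) + 2) :> rat.
  apply: divr_ge0; lra.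
have c4 : 0 <= 2 / (l%:R + 1 + (m%:~R + 1) + 2) :> rat by apply: divr_ge0; lra.
have c5 : 0 <= 4 / ((l%:R + 1 + (m%:~R + 1) + 4) * (l%:R + 1 + (m%:~R + 1) + 2)) :> rat.
  apply: divr_ge0; [lra | apply: mulr_ge0; lra].
have := mulr_ge0 c2 i2; have := mulr_ge0 c4 i4; have := mulr_ge0 c5 i5.
lra.
Qed.

Lemma lowerH l (m : int) N : 0 <= m -> m <= l%:Z ->
  (l%:R - m%:~R + 4) / (l%:R + m%:~R + 4) * q l.+3 (m + 1) N <= q l.+2 m N.
Proof.
move=> hm hml.
have hLM : ((m)%:~R : rat) <= (l%:Z)%:~R by rewrite ler_int.
rewrite nat_intr in hLM.
have hM : (0 : rat) <= m%:~R by rewrite ler0z.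
case: (ltnP l.+2 N) => hN; last first.
  rewrite (@q_gt l.+3 (m + 1) N); try lia.
  rewrite !mulr0; apply: q_ge0'; lia.
rewrite [q l.+2 m N]q_rec //.
rewrite (_ : (l.+2)%:R = l%:R + 2 :> rat); last by rewrite -addn2 natrD.
have -> : l%:R - m%:~R + 4 = l%:R + 2 - m%:~R + 2 :> rat by ring.
have -> : l%:R + m%:~R + 4 = l%:R + 2 + m%:~R + 2 :> rat by ring.
have i1 : 0 <= q l.+3 (m - 1) N by apply: q_ge0'; lia.
have i3 : 0 <= q l.+4 (m - 2) N by apply: q_ge0'; lia.
have i4 : 0 <= q l.+1.+4 (m - 1) N by apply: q_ge0'; lia.
have i5 : 0 <= q l.+1.+4 (m + 1) N by apply: q_ge0'; lia.
have c1 : 0 <= (l%:R + 2 - m%:~R) / (l%:R + 2 - m%:~R + 2) :> rat by apply: divr_ge0; lra.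
have c3 : 0 <= 2 / (l%:R + 2 - m%:~R + 4) :> rat by apply: divr_ge0; lra.
have c4 : 0 <= 2 / (l%:R + 2 + m%:~R + 2) :> rat by apply: divr_ge0; lra.
have c5 : 0 <= 4 / ((l%:R + 2 + m%:~R + 4) * (l%:R + 2 + m%:~R + 2)) :> rat.
  apply: divr_ge0; [lra | apply: mulr_ge0; lra].
have := mulr_ge0 c1 i1; have := mulr_ge0 c3 i3; have := mulr_ge0 c4 i4; have := mulr_ge0 c5 i5.
lra.
Qed.


Ltac pos := match goal with
  | |- is_true (0 <= (GRing.natmul _ _)) => apply: ler0n
  | |- is_true (0 <= 1) => exact: ler01
  | |- is_true (0 <= _ + _) => apply: addr_ge0; pos
  | |- is_true (0 <= _ * _) => apply: mulr_ge0; pos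
  | |- is_true (0 <= _ ^+ _) => apply: exprn_ge0; pos
  | |- is_true (0 <= _ ^-1) => rewrite invr_ge0; pos
  | |- _ => assumption
  end.
Lemma core1 (L M X0 X1 X3 Y0 Y2 Z0 Z1 Z3 : rat) :
  2 <= L - M -> 1 <= M ->
  0 <= X0 -> 0 <= X1 -> 0 <= X3 -> 0 <= Y0 -> 0 <= Y2 -> 0 <= Z0 -> 0 <= Z1 -> 0 <= Z3 ->
  M * X1 <= (M + 2) * X0 -> (M + 2) * X3 <= (M + 4) * X1 -> (M - 1) * Y2 <= (M + 1) * Y0 ->
  M * Z1 <= (M + 2) * Z0 -> (M + 2) * Z3 <= (M + 4) * Z1 ->
  (L - M) / (L - M + 2) * Y2 + 2 / (L - M + 4) * Z0 <= X1 ->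
  (L - M + 4) / (L + M + 4) * Z1 <= Y2 ->
  (M + 1) * ((L - (M + 2)) / (L - (M + 2) + 2) * X1 + (L - (M + 2) + 2) / (L + (M + 2) + 2) * X3 + 2 / (L - (M + 2) + 4) * Y2 + 2 / (L + (M + 2) + 2) * Z1 + 4 / ((L + (M + 2) + 4) * (L + (M + 2) + 2)) * Z3) <= (M + 3) * ((L - M) / (L - M + 2) * X0 + (L - M + 2) / (L + M + 2) * X1 + 2 / (L - M + 4) * Y0 + 2 / (L + M + 2) * Z0 + 4 / ((L + M + 4) * (L + M + 2)) * Z1).
Proof.
move=> hLM hM hX0 hX1 hX3 hY0 hY2 hZ0 hZ1 hZ3 hFa hFb hFc hFd hFe hFf hFh.
have [b hb eM] : exists2 b : rat, 0 <= b & M = b + 1 by exists (M - 1); [lra | ring].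
subst M.
have [a ha eL] : exists2 a : rat, 0 <= a & L = b + 1 + 2 + a by exists (L - (b + 1) - 2); [lra | ring].
subst L.
have hFa' : 0 <= ((b + 1) + 2) * X0 - (b + 1) * X1 by rewrite subr_ge0.
have hFb' : 0 <= ((b + 1) + 4) * X1 - ((b + 1) + 2) * X3 by rewrite subr_ge0.
have hFc' : 0 <= ((b + 1) + 1) * Y0 - ((b + 1) - 1) * Y2 by rewrite subr_ge0.
have hFd' : 0 <= ((b + 1) + 2) * Z0 - (b + 1) * Z1 by rewrite subr_ge0.
have hFe' : 0 <= ((b + 1) + 4) * Z1 - ((b + 1) + 2) * Z3 by rewrite subr_ge0.
have hFf' : 0 <= X1 - (((b + 1 + 2 + a) - (b + 1)) / ((b + 1 + 2 + a) - (b + 1) + 2) * Y2 + 2 / ((b + 1 + 2 + a) - (b + 1) + 4) * Z0) by rewrite subr_ge0.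
have hFh' : 0 <= Y2 - ((b + 1 + 2 + a) - (b + 1) + 4) / ((b + 1 + 2 + a) + (b + 1) + 4) * Z1 by rewrite subr_ge0.
rewrite -subr_ge0.
match goal with |- is_true (0 <= ?G) => have -> : G = ((b + 4) * (a + 2) / ((a + 4) * (b + 3))) * (((b + 1) + 2) * X0 - (b + 1) * X1) + ((b + 2) * (a + 2) / ((a + 2 * b + 8) * (b + 3))) * (((b + 1) + 4) * X1 - ((b + 1) + 2) * X3) + (2 * (b + 4) / ((a + 6) * (b + 2))) * (((b + 1) + 1) * Y0 - ((b + 1) - 1) * Y2) + (2 * (b + 4) / ((a + 2 * b + 6) * (b + 3)) + (((880 + 1000 * 2) + (976 + 1000 * 2) * b + (200 + 1000 * 1) * b^+2 + 224 * b^+3 + 16 * b^+4 + (936 + 1000 * 1) * a + (552 + 1000 * 1) * a * b + 424 * a * b^+2 + 40 * a * b^+3 + 472 * a^+2 + 320 * a^+2 * b + 68 * a^+2 * b^+2 + 4 * a^+2 * b^+3 + 40 * a^+3 + 24 * a^+3 * b + 4 * a^+3 * b^+2) / ((b + 3) * (a + 2) * (a + 4) * (a + 2 * b + 6) * (a + 2 * b + 8))) * (2 / ((a + 6) * (b + 3)))) * (((b + 1) + 2) * Z0 - (b + 1) * Z1) + (4 * (b + 2) / ((a + 2 * b + 10) * (a + 2 * b + 8) * (b + 3))) * (((b + 1) + 4) * Z1 - ((b + 1) + 2) * Z3) + (((880 + 1000 * 2) + (976 + 1000 * 2) * b + (200 + 1000 * 1) * b^+2 + 224 * b^+3 + 16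 * b^+4 + (936 + 1000 * 1) * a + (552 + 1000 * 1) * a * b + 424 * a * b^+2 + 40 * a * b^+3 + 472 * a^+2 + 320 * a^+2 * b + 68 * a^+2 * b^+2 + 4 * a^+2 * b^+3 + 40 * a^+3 + 24 * a^+3 * b + 4 * a^+3 * b^+2) / ((b + 3) * (a + 2) * (a + 4) * (a + 2 * b + 6) * (a + 2 * b + 8))) * (X1 - (((b + 1 + 2 + a) - (b + 1)) / ((b + 1 + 2 + a) - (b + 1) + 2) * Y2 + 2 / ((b + 1 + 2 + a) - (b + 1) + 4) * Z0)) + (((824 + 1000 * 13) + (864 + 1000 * 36) * b + (648 + 1000 * 27) * b^+2 + (896 + 1000 * 8) * b^+3 + (280 + 1000 * 1) * b^+4 + 64 * b^+5 + (728 + 1000 * 25) * a + (488 + 1000 * 55) * a * b + (392 + 1000 * 35) * a * b^+2 + (472 + 1000 * 9) * a * b^+3 + (56 + 1000 * 1) * a * b^+4 + 32 * a * b^+5 + (304 + 1000 * 18) * a^+2 + (568 + 1000 * 33) * a^+2 * b + (384 + 1000 * 18) * a^+2 * b^+2 + (1000 * 4) * a^+2 * b^+3 + 304 * a^+2 * b^+4 + (144 + 1000 * 6) * a^+3 + (128 + 1000 * 10) * a^+3 * b + (976 + 1000 * 4) * a^+3 * b^+2 + 936 * a^+3 * b^+3 + 56 * a^+3 * b^+4 + 960 * a^+4 + (464 + 1000 * 1) * a^+4 * b + 652 * a^+4 * b^+2 + 104 * a^+4 * b^+3 + 4 * a^+4 * b^+4 + 56 * a^+5 + 80 * a^+5 *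 b + 32 * a^+5 * b^+2 + 4 * a^+5 * b^+3) / ((b + 2) * (b + 3) * (a + 2) * (a + 4) * (a + 4) * (a + 6) * (a + 2 * b + 6) * (a + 2 * b + 8))) * (Y2 - ((b + 1 + 2 + a) - (b + 1) + 4) / ((b + 1 + 2 + a) + (b + 1) + 4) * Z1) + (((280 + 1000 * (649 + 1000 * 7)) + (936 + 1000 * (695 + 1000 * 22)) * b + (936 + 1000 * (767 + 1000 * 25)) * b^+2 + (744 + 1000 * (487 + 1000 * 15)) * b^+3 + (760 + 1000 * (557 + 1000 * 5)) * b^+4 + (720 + 1000 * (246 + 1000 * 1)) * b^+5 + (80 + 1000 * 174) * b^+6 + (80 + 1000 * 14) * b^+7 + 512 * b^+8 + (712 + 1000 * (59 + 1000 * 11)) * a + (664 + 1000 * (801 + 1000 * 30)) * a * b + (720 + 1000 * (998 + 1000 * 31)) * a * b^+2 + (488 + 1000 * (87 + 1000 * 17)) * a * b^+3 + (192 + 1000 * (240 + 1000 * 5)) * a * b^+4 + (88 + 1000 * 953) * a * b^+5 + (608 + 1000 * 100) * a * b^+6 + (632 + 1000 * 5) * a * b^+7 + 128 * a * b^+8 + (400 + 1000 * (14 + 1000 * 7)) * a^+2 + (376 + 1000 * (325 + 1000 * 18)) * a^+2 * b + (32 + 1000 * (476 + 1000 * 17)) * a^+2 * b^+2 + (592 + 1000 * (326 + 1000 * 8)) * a^+2 * b^+3 + (400 + 1000 * (182 + 1000 * 2)) * a^+2 * b^+4 + (712 + 1000 * 315) * a^+2 * b^+5 + (104 + 1000 *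 23) * a^+2 * b^+6 + 640 * a^+2 * b^+7 + (944 + 1000 * (514 + 1000 * 2)) * a^+3 + (464 + 1000 * (174 + 1000 * 6)) * a^+3 * b + (464 + 1000 * (434 + 1000 * 5)) * a^+3 * b^+2 + (856 + 1000 * (329 + 1000 * 2)) * a^+3 * b^+3 + (1000 * 528) * a^+3 * b^+4 + (536 + 1000 * 61) * a^+3 * b^+5 + (104 + 1000 * 3) * a^+3 * b^+6 + 32 * a^+3 * b^+7 + (424 + 1000 * 543) * a^+4 + (744 + 1000 * (255 + 1000 * 1)) * a^+4 * b + (320 + 1000 * (22 + 1000 * 1)) * a^+4 * b^+2 + (40 + 1000 * 395) * a^+4 * b^+3 + (344 + 1000 * 77) * a^+4 * b^+4 + (200 + 1000 * 7) * a^+4 * b^+5 + 240 * a^+4 * b^+6 + (920 + 1000 * 69) * a^+5 + (160 + 1000 * 152) * a^+5 * b + (376 + 1000 * 114) * a^+5 * b^+2 + (544 + 1000 * 39) * a^+5 * b^+3 + (544 + 1000 * 6) * a^+5 * b^+4 + 456 * a^+5 * b^+5 + 8 * a^+5 * b^+6 + (912 + 1000 * 4) * a^+6 + (56 + 1000 * 10) * a^+6 * b + (936 + 1000 * 6) * a^+6 * b^+2 + (108 + 1000 * 2) * a^+6 * b^+3 + 280 * a^+6 * b^+4 + 12 * a^+6 * b^+5 + 144 * a^+7 + 276 * a^+7 * b + 172 * a^+7 * b^+2 + 44 * a^+7 * b^+3 + 4 * a^+7 * b^+4) / ((b + 2) * (b + 3) * (b + 3) * (a + 2) * (a + 4) *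 (a + 4) * (a + 6) * (a + 2 * b + 6) * (a + 2 * b + 8) * (a + 2 * b + 8) * (a + 2 * b + 10))) * Z1 end.
  field; rewrite ?mulf_eq0 ?negb_or; repeat (apply/andP; split); apply/lt0r_neq0; lra.
have key : forall fa fb fc fd fe ff fh : rat, 0 <= fa -> 0 <= fb -> 0 <= fc -> 0 <= fd -> 0 <= fe -> 0 <= ff -> 0 <= fh -> 0 <= ((b + 4) * (a + 2) / ((a + 4) * (b + 3))) * fa + ((b + 2) * (a + 2) / ((a + 2 * b + 8) * (b + 3))) * fb + (2 * (b + 4) / ((a + 6) * (b + 2))) * fc + (2 * (b + 4) / ((a + 2 * b + 6) * (b + 3)) + (((880 + 1000 * 2) + (976 + 1000 * 2) * b + (200 + 1000 * 1) * b^+2 + 224 * b^+3 + 16 * b^+4 + (936 + 1000 * 1) * a + (552 + 1000 * 1) * a * b + 424 * a * b^+2 + 40 * a * b^+3 + 472 * a^+2 + 320 * a^+2 * b + 68 * a^+2 * b^+2 + 4 * a^+2 * b^+3 + 40 * a^+3 + 24 * a^+3 * b + 4 * a^+3 * b^+2) / ((b + 3) * (a + 2) * (a + 4) * (a + 2 * b + 6) * (a + 2 * b + 8))) * (2 / ((a + 6) * (b + 3)))) * fd + (4 * (b + 2) / ((a + 2 * b + 10) * (a + 2 * b + 8) * (b + 3))) * fe + (((880 + 1000 * 2) + (976 + 1000 * 2) * b + (200 + 1000 * 1) * b^+2 + 224 * b^+3 + 16 * b^+4 + (936 + 1000 * 1) * a + (552 + 1000 * 1) * a * b + 424 * a * b^+2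 + 40 * a * b^+3 + 472 * a^+2 + 320 * a^+2 * b + 68 * a^+2 * b^+2 + 4 * a^+2 * b^+3 + 40 * a^+3 + 24 * a^+3 * b + 4 * a^+3 * b^+2) / ((b + 3) * (a + 2) * (a + 4) * (a + 2 * b + 6) * (a + 2 * b + 8))) * ff + (((824 + 1000 * 13) + (864 + 1000 * 36) * b + (648 + 1000 * 27) * b^+2 + (896 + 1000 * 8) * b^+3 + (280 + 1000 * 1) * b^+4 + 64 * b^+5 + (728 + 1000 * 25) * a + (488 + 1000 * 55) * a * b + (392 + 1000 * 35) * a * b^+2 + (472 + 1000 * 9) * a * b^+3 + (56 + 1000 * 1) * a * b^+4 + 32 * a * b^+5 + (304 + 1000 * 18) * a^+2 + (568 + 1000 * 33) * a^+2 * b + (384 + 1000 * 18) * a^+2 * b^+2 + (1000 * 4) * a^+2 * b^+3 + 304 * a^+2 * b^+4 + (144 + 1000 * 6) * a^+3 + (128 + 1000 * 10) * a^+3 * b + (976 + 1000 * 4) * a^+3 * b^+2 + 936 * a^+3 * b^+3 + 56 * a^+3 * b^+4 + 960 * a^+4 + (464 + 1000 * 1) * a^+4 * b + 652 * a^+4 * b^+2 + 104 * a^+4 * b^+3 + 4 * a^+4 * b^+4 + 56 * a^+5 + 80 * a^+5 * b + 32 * a^+5 * b^+2 + 4 * a^+5 * b^+3) / ((b + 2) * (b + 3) * (a + 2) * (a + 4) * (a + 4) * (a + 6) * (a + 2 * b + 6) * (a + 2 * b + 8))) * fh + (((280 + 1000 * (649 + 1000 * 7)) + (936 + 1000 * (695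 + 1000 * 22)) * b + (936 + 1000 * (767 + 1000 * 25)) * b^+2 + (744 + 1000 * (487 + 1000 * 15)) * b^+3 + (760 + 1000 * (557 + 1000 * 5)) * b^+4 + (720 + 1000 * (246 + 1000 * 1)) * b^+5 + (80 + 1000 * 174) * b^+6 + (80 + 1000 * 14) * b^+7 + 512 * b^+8 + (712 + 1000 * (59 + 1000 * 11)) * a + (664 + 1000 * (801 + 1000 * 30)) * a * b + (720 + 1000 * (998 + 1000 * 31)) * a * b^+2 + (488 + 1000 * (87 + 1000 * 17)) * a * b^+3 + (192 + 1000 * (240 + 1000 * 5)) * a * b^+4 + (88 + 1000 * 953) * a * b^+5 + (608 + 1000 * 100) * a * b^+6 + (632 + 1000 * 5) * a * b^+7 + 128 * a * b^+8 + (400 + 1000 * (14 + 1000 * 7)) * a^+2 + (376 + 1000 * (325 + 1000 * 18)) * a^+2 * b + (32 + 1000 * (476 + 1000 * 17)) * a^+2 * b^+2 + (592 + 1000 * (326 + 1000 * 8)) * a^+2 * b^+3 + (400 + 1000 * (182 + 1000 * 2)) * a^+2 * b^+4 + (712 + 1000 * 315) * a^+2 * b^+5 + (104 + 1000 * 23) * a^+2 * b^+6 + 640 * a^+2 * b^+7 + (944 + 1000 * (514 + 1000 * 2)) * a^+3 + (464 + 1000 * (174 + 1000 * 6)) * a^+3 * b + (464 + 1000 * (434 + 1000 * 5)) * a^+3 * b^+2 + (856 + 1000 * (329 + 1000 * 2)) * a^+3 * b^+3 + (1000 * 528) * a^+3 * b^+4 + (536 + 1000 * 61) * a^+3 * b^+5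 + (104 + 1000 * 3) * a^+3 * b^+6 + 32 * a^+3 * b^+7 + (424 + 1000 * 543) * a^+4 + (744 + 1000 * (255 + 1000 * 1)) * a^+4 * b + (320 + 1000 * (22 + 1000 * 1)) * a^+4 * b^+2 + (40 + 1000 * 395) * a^+4 * b^+3 + (344 + 1000 * 77) * a^+4 * b^+4 + (200 + 1000 * 7) * a^+4 * b^+5 + 240 * a^+4 * b^+6 + (920 + 1000 * 69) * a^+5 + (160 + 1000 * 152) * a^+5 * b + (376 + 1000 * 114) * a^+5 * b^+2 + (544 + 1000 * 39) * a^+5 * b^+3 + (544 + 1000 * 6) * a^+5 * b^+4 + 456 * a^+5 * b^+5 + 8 * a^+5 * b^+6 + (912 + 1000 * 4) * a^+6 + (56 + 1000 * 10) * a^+6 * b + (936 + 1000 * 6) * a^+6 * b^+2 + (108 + 1000 * 2) * a^+6 * b^+3 + 280 * a^+6 * b^+4 + 12 * a^+6 * b^+5 + 144 * a^+7 + 276 * a^+7 * b + 172 * a^+7 * b^+2 + 44 * a^+7 * b^+3 + 4 * a^+7 * b^+4) / ((b + 2) * (b + 3) * (b + 3) * (a + 2) * (a + 4) * (a + 4) * (a + 6) * (a + 2 * b + 6) * (a + 2 * b + 8) * (a + 2 * b + 8) * (a + 2 * b + 10))) * Z1.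
  move=> fa fb fc fd fe ff fh hfa hfb hfc hfd hfe hff hfh; pos.
exact: (key _ _ _ _ _ _ _ hFa' hFb' hFc' hFd' hFe' hFf' hFh').
Qed.

Lemma core0 (L M X0 X1 X3 Y0 Y2 Z0 Z1 Z3 : rat) :
  2 <= L - M -> M = 0 -> X0 = 0 -> Y0 = 0 -> Z0 = 0 ->
  0 <= X0 -> 0 <= X1 -> 0 <= X3 -> 0 <= Y0 -> 0 <= Y2 -> 0 <= Z0 -> 0 <= Z1 -> 0 <= Z3 ->
  M * X1 <= (M + 2) * X0 -> (M + 2) * X3 <= (M + 4) * X1 -> (M - 1) * Y2 <= (M + 1) * Y0 ->
  M * Z1 <= (M + 2) * Z0 -> (M + 2) * Z3 <= (M + 4) * Z1 ->
  (L - M) / (L - M + 2) * Y2 + 2 / (L - M + 4) * Z0 <= X1 ->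
  (L - M + 4) / (L + M + 4) * Z1 <= Y2 ->
  (M + 1) * ((L - (M + 2)) / (L - (M + 2) + 2) * X1 + (L - (M + 2) + 2) / (L + (M + 2) + 2) * X3 + 2 / (L - (M + 2) + 4) * Y2 + 2 / (L + (M + 2) + 2) * Z1 + 4 / ((L + (M + 2) + 4) * (L + (M + 2) + 2)) * Z3) <= (M + 3) * ((L - M) / (L - M + 2) * X0 + (L - M + 2) / (L + M + 2) * X1 + 2 / (L - M + 4) * Y0 + 2 / (L + M + 2) * Z0 + 4 / ((L + M + 4) * (L + M + 2)) * Z1).
Proof.
move=> hLM hM0 hX00 hY00 hZ00 hX0 hX1 hX3 hY0 hY2 hZ0 hZ1 hZ3 hFa hFb hFc hFd hFe hFf hFh.
subst M X0 Y0 Z0.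
have [a ha eL] : exists2 a : rat, 0 <= a & L = 2 + a by exists (L - 2); [lra | ring].
subst L.
have hFb' : 0 <= (0 + 4) * X1 - (0 + 2) * X3 by rewrite subr_ge0.
have hFe' : 0 <= (0 + 4) * Z1 - (0 + 2) * Z3 by rewrite subr_ge0.
have hFf' : 0 <= X1 - (((2 + a) - 0) / ((2 + a) - 0 + 2) * Y2 + 2 / ((2 + a) - 0 + 4) * 0) by rewrite subr_ge0.
have hFh' : 0 <= Y2 - ((2 + a) - 0 + 4) / ((2 + a) + 0 + 4) * Z1 by rewrite subr_ge0.
rewrite -subr_ge0.
match goal with |- is_true (0 <= ?G) => have -> : G = ((a + 2) / ((a + 6) * 2)) * ((0 + 4) * X1 - (0 + 2) * X3) + (4 / ((a + 8) * (a + 6) * 2)) * ((0 + 4) * Z1 - (0 + 2) * Z3) + ((896 + 768 * a + 216 * a^+2 + 20 * a^+3) / (2 * (a + 2) * (a + 4) * (a + 4) * (a + 6))) * (X1 - (((2 + a) - 0) / ((2 + a) - 0 + 2) * Y2 + 2 / ((2 + a) - 0 + 4) * 0)) + (((24 + 1000 * 1) + (536 + 1000 * 1) * a + 832 * a^+2 + 192 * a^+3 + 16 * a^+4) / (2 * (a + 2) * (a + 4) * (a + 4) * (a + 4) * (a + 6))) * (Y2 - ((2 + a) - 0 + 4) / ((2 + a) + 0 + 4) * Z1) + (((824 + 1000 * 589) + (912 + 1000 * (62 + 1000 * 1)) * a + (600 + 1000 * 793) * a^+2 + (360 + 1000 * 319) * a^+3 + (8 + 1000 * 75) * a^+4 +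 (304 + 1000 * 10) * a^+5 + 768 * a^+6 + 24 * a^+7) / (2 * 2 * (a + 2) * (a + 4) * (a + 4) * (a + 6) * (a + 4) * (a + 6) * (a + 6) * (a + 8))) * Z1 end.
  field; rewrite ?mulf_eq0 ?negb_or; repeat (apply/andP; split); apply/lt0r_neq0; lra.
have key : forall fb fe ff fh : rat, 0 <= fb -> 0 <= fe -> 0 <= ff -> 0 <= fh -> 0 <= ((a + 2) / ((a + 6) * 2)) * fb + (4 / ((a + 8) * (a + 6) * 2)) * fe + ((896 + 768 * a + 216 * a^+2 + 20 * a^+3) / (2 * (a + 2) * (a + 4) * (a + 4) * (a + 6))) * ff + (((24 + 1000 * 1) + (536 + 1000 * 1) * a + 832 * a^+2 + 192 * a^+3 + 16 * a^+4) / (2 * (a + 2) * (a + 4) * (a + 4) * (a + 4) * (a + 6))) * fh + (((824 + 1000 * 589) + (912 + 1000 * (62 + 1000 * 1)) * a + (600 + 1000 * 793) * a^+2 + (360 + 1000 * 319) * a^+3 + (8 + 1000 * 75) * a^+4 + (304 + 1000 * 10) * a^+5 + 768 * a^+6 + 24 * a^+7) / (2 * 2 * (a + 2) * (a + 4) * (a + 4) * (a + 6) * (a + 4) * (a + 6) * (a + 6) * (a + 8))) * Z1.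
  move=> fb fe ff fh hfb hfe hff hfh; pos.
exact: (key _ _ _ _ hFb' hFe' hFf' hFh').
Qed.


Lemma neg_case N l (m : int) : m < 0 -> m + 2 <= l%:Z ->
  (m%:~R + 1) * q l (m + 2) N <= (m%:~R + 3) * q l m N.
Proof.
move=> hm hml.
rewrite (@q_neg l m N hm) mulr0.
have hq : 0 <= q l (m + 2) N by apply: q_ge0'.
have : (m%:~R : rat) <= (-1)%:~R by rewrite ler_int; lia.
move=> h; nra.
Qed.

Lemma base_case N l (m : int) : (N <= l)%N -> 0 <= m -> m + 2 <= l%:Z ->
  (m%:~R + 1) * q l (m + 2) N <= (m%:~R + 3) * q l m N.
Proof.
move=> hl hm hml.
have -> : q l (m + 2) N = 0.
  rewrite /q; case: ifP => // _.
  rewrite ltNge (_ : 0 <= m + 2) /=; last by lia.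
  have -> : (N - l = 0)%N by lia.
  by rewrite /=; case: eqP => //; lia.
have hq : 0 <= q l m N by apply: q_ge0'; lia.
have hM : (0 : rat) <= m%:~R by rewrite ler0z.
rewrite mulr0; apply: mulr_ge0 => //; lra.
Qed.


Lemma step N k : forall l (m : int), (N - l <= k)%N -> m + 2 <= l%:Z ->
  (m%:~R + 1) * q l (m + 2) N <= (m%:~R + 3) * q l m N.
Proof.
elim: k => [|k IH] l m hk hml.
  case: (ltrP m 0) => hm0; first exact: neg_case.
  apply: base_case => //; lia.
case: (ltrP m 0) => hm0; first exact: neg_case.
case: (leqP N l) => hlN; first exact: base_case.
have hm2 : 0 <= m + 2 by lia.
have n1 : 0 <= q l.+1 (m - 1) N by apply: q_ge0'; (clear -hml hm0 hk hlN; lia).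
have n2 : 0 <= q l.+1 (m + 1) N by apply: q_ge0'; (clear -hml hm0 hk hlN; lia).
have n3 : 0 <= q l.+1 (m + 3) N by apply: q_ge0'; (clear -hml hm0 hk hlN; lia).
have n4 : 0 <= q l.+2 (m - 2) N by apply: q_ge0'; (clear -hml hm0 hk hlN; lia).
have n5 : 0 <= q l.+2 m N by apply: q_ge0'; (clear -hml hm0 hk hlN; lia).
have n6 : 0 <= q l.+3 (m - 1) N by apply: q_ge0'; (clear -hml hm0 hk hlN; lia).
have n7 : 0 <= q l.+3 (m + 1) N by apply: q_ge0'; (clear -hml hm0 hk hlN; lia).
have n8 : 0 <= q l.+3 (m + 3) N by apply: q_ge0'; (clear -hml hm0 hk hlN; lia).
have hFf := @lowerF l m N hm0 hml.
rewrite [q l m N]q_rec // [q l (m + 2) N]q_rec //.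
have -> : m + 2 - 1 = m + 1 by (clear -hml hm0 hk hlN; lia).
have -> : m + 2 + 1 = m + 3 by (clear -hml hm0 hk hlN; lia).
have -> : m + 2 - 2 = m by (clear -hml hm0 hk hlN; lia).
rewrite intD2.
have hLM0 : ((m + 2)%:~R : rat) <= (l%:Z)%:~R by rewrite ler_int.
rewrite intD2 nat_intr in hLM0.
have hLM : 2 <= l%:R - m%:~R :> rat by lra.
have hk' : (N - l.+1 <= k)%N by (clear -hml hm0 hk hlN; lia).
have hFa : m%:~R * q l.+1 (m + 1) N <= (m%:~R + 2) * q l.+1 (m - 1) N.
  have := IH l.+1 (m - 1) hk' ltac:((clear -hml hm0 hk hlN; lia)).
  rewrite (_ : m - 1 + 2 = m + 1); last by (clear -hml hm0 hk hlN; lia).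
  rewrite intB1; lra.
have hFb : (m%:~R + 2) * q l.+1 (m + 3) N <= (m%:~R + 4) * q l.+1 (m + 1) N.
  have := IH l.+1 (m + 1) hk' ltac:((clear -hml hm0 hk hlN; lia)).
  rewrite (_ : m + 1 + 2 = m + 3); last by (clear -hml hm0 hk hlN; lia).
  rewrite intD1; lra.
have hk2 : (N - l.+2 <= k)%N by (clear -hml hm0 hk hlN; lia).
have hFc : (m%:~R - 1) * q l.+2 m N <= (m%:~R + 1) * q l.+2 (m - 2) N.
  have := IH l.+2 (m - 2) hk2 ltac:((clear -hml hm0 hk hlN; lia)).
  rewrite (_ : m - 2 + 2 = m); last by (clear -hml hm0 hk hlN; lia).
  rewrite intB2; lra.
have hk3 : (N - l.+3 <= k)%N by (clear -hml hm0 hk hlN; lia).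
have hFd : m%:~R * q l.+3 (m + 1) N <= (m%:~R + 2) * q l.+3 (m - 1) N.
  have := IH l.+3 (m - 1) hk3 ltac:((clear -hml hm0 hk hlN; lia)).
  rewrite (_ : m - 1 + 2 = m + 1); last by (clear -hml hm0 hk hlN; lia).
  rewrite intB1; lra.
have hFe : (m%:~R + 2) * q l.+3 (m + 3) N <= (m%:~R + 4) * q l.+3 (m + 1) N.
  have := IH l.+3 (m + 1) hk3 ltac:((clear -hml hm0 hk hlN; lia)).
  rewrite (_ : m + 1 + 2 = m + 3); last by (clear -hml hm0 hk hlN; lia).
  rewrite intD1; lra.
have hFh := @lowerH l m N hm0 ltac:((clear -hml hm0 hk hlN; lia)).
case: (ltrP 0 m) => hmpos.
  have hM : 1 <= m%:~R :> rat.
    have : ((1 : int)%:~R : rat) <= m%:~R by rewrite ler_int; clear -hmpos; lia.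
    by [].
  have HH := @core1 _ _ _ _ _ _ _ _ _ _ hLM hM n1 n2 n3 n4 n5 n6 n7 n8 hFa hFb hFc hFd hFe hFf hFh. exact HH.
have hm0' : m = 0 by clear -hmpos hm0; lia.
have e1 : q l.+1 (m - 1) N = 0 by rewrite q_neg //; clear -hmpos hm0; lia.
have e2 : q l.+2 (m - 2) N = 0 by rewrite q_neg //; clear -hmpos hm0; lia.
have e3 : q l.+3 (m - 1) N = 0 by rewrite q_neg //; clear -hmpos hm0; lia.
have eM : (m%:~R : rat) = 0 by rewrite hm0'.
exact: (@core0 _ _ _ _ _ _ _ _ _ _ hLM eM e1 e2 e3 n1 n2 n3 n4 n5 n6 n7 n8 hFa hFb hFc hFd hFe hFf hFh).
Qed.


Lemma chain N l j t : (j + 2 * t <= l)%N ->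
  q l (j + 2 * t)%N%:Z N / (j + 2 * t).+1%:R <= q l j%:Z N / j.+1%:R.
Proof.
elim: t => [|t IHt] h.
  by rewrite muln0 addn0.
have h1 : (j + 2 * t <= l)%N by lia.
apply: le_trans (IHt h1).
set m := (j + 2 * t)%N.
have hs := @step N (N - l)%N l m%:Z (leqnn _) ltac:(rewrite /m; lia).
rewrite (_ : (j + 2 * t.+1)%N = m.+2); last by rewrite /m; lia.
rewrite (_ : (m.+2)%:Z = m%:Z + 2); last by lia.
have hx : 0 <= q l (m%:Z + 2) N by apply: q_ge0'; rewrite /m; lia.
have hy : 0 <= q l m%:Z N by apply: q_ge0'; rewrite /m; lia.
rewrite nat_intr in hs.
rewrite (_ : (m.+3)%:R = m%:R + 3 :> rat); last by rewrite -addn3 natrD.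
rewrite (_ : (m.+1)%:R = m%:R + 1 :> rat); last by rewrite -addn1 natrD.
have hm : (0 : rat) <= m%:R by apply: ler0n.
rewrite ler_pdivrMr; last by lra.
rewrite mulrAC ler_pdivlMr; last by lra.
lra.
Qed.

Theorem lemma5p4 (n l j k : nat) :
  (10 <= n)%N -> (j < k)%N -> (k <= l)%N -> (l <= n.*2)%N -> ~~ odd (k - j) ->
  q l k%:Z n.*2 / (k.+1)%:R <= q l j%:Z n.*2 / (j.+1)%:R.
Proof.
move=> _ hjk hkl _ hodd.
have := odd_double_half (k - j); rewrite (negbTE hodd) add0n -mul2n => e.
have ek : k = (j + 2 * (k - j)./2)%N by lia.
rewrite ek; apply: chain; lia.
Qed.
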